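(* Let $a$ be a nonzero even integer, $x\in\mathbb Z\setminus\{0\}$, $\sigma\in\{1,-1\}$, $r\in\mathbb Q\setminus\{0\}$, and suppose that $$\alpha= r\left(\frac{x+\sqrt{x^2+4\sigma}}{2}\right)^{a}$$ is a positive irrational real number. Then there is a constant $C=C(\alpha)>0$ such that $\delta_{\min}^{(\alpha)}(N)\le C/N$ for all integers $N\ge2$. (For example, this applies to $\alpha=(3+\sqrt5)/2$.)
   Context: For irrational $\alpha>0$, the numbers $\alpha m^2+n^2$ with integers $m,n\ge 1$ are pairwise distinct; list them in increasing order as $0<\lambda_1<\lambda_2<\cdots$. For $N\ge 2$ define $\delta_{\min}^{(\alpha)}(N)=\min\{\lambda_{i+1}-\lambda_i : 1\le i<N\}$. *)

(* Defs.v *)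
From Stdlib Require Import Reals QArith Qreals ZArith Lia Lra ClassicalEpsilon.
Open Scope R_scope.

Definition spec_set (alpha : R) (v : R) : Prop :=
  exists m n : nat, (1 <= m)%nat /\ (1 <= n)%nat /\
    v = alpha * (INR m) ^ 2 + (INR n) ^ 2.

Definition is_increasing_enum (alpha : R) (f : nat -> R) : Prop :=
  (forall i j : nat, (1 <= i)%nat -> (i < j)%nat -> f i < f j) /\
  (forall v : R, spec_set alpha v <-> exists i : nat, (1 <= i)%nat /\ f i = v).

(* lambda_ alpha i = lambda_i : the increasing enumeration (chosen by Hilbert's
   epsilon; it is unique whenever it exists). *)
Definition lambda_ (alpha : R) : nat -> R :=
  epsilon (inhabits (fun _ : nat => 0)) (is_increasing_enum alpha).

Fixpoint min_gap (f : nat -> R) (k : nat) : R :=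
  match k with
  | O => f 2%nat - f 1%nat          (* unused default *)
  | S O => f 2%nat - f 1%nat
  | S k' => Rmin (min_gap f k') (f (S k) - f k)
  end.

(* delta_min^(alpha)(N) = min { lambda_{i+1} - lambda_i : 1 <= i < N }, N >= 2. *)
Definition delta_min (alpha : R) (N : nat) : R := min_gap (lambda_ alpha) (N - 1).

(* Main.v *)
Require Import Defs.
From Stdlib Require Import Reals QArith Qreals ZArith Lia Lra List ClassicalEpsilon.
Open Scope R_scope.

Definition mu (alpha : R) := Rmin alpha 1.

Lemma mu_pos alpha : 0 < alpha -> 0 < mu alpha.
Proof. intros; unfold mu, Rmin; destruct Rle_dec; lra. Qed.

Lemma mu_le alpha : mu alpha <= alpha /\ mu alpha <= 1.
Proof. unfold mu, Rmin; destruct Rle_dec; lra. Qed.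

Definition boxval (alpha : R) (p : nat * nat) : R :=
  alpha * INR (fst p) ^ 2 + INR (snd p) ^ 2.

Definition box (B : nat) := list_prod (seq 1 B) (seq 1 B).

Lemma spec_pos alpha v : 0 < alpha -> spec_set alpha v -> 0 < v.
Proof.
  intros ha [m [n [hm [hn ->]]]].
  assert (1 <= INR n) by (apply (le_INR 1); lia). nra.
Qed.

Lemma in_box alpha B w : 0 < alpha -> spec_set alpha w ->
  w < mu alpha * (INR B + 1) ^ 2 -> In w (map (boxval alpha) (box B)).
Proof.
  intros ha [m [n [hm [hn ->]]]] hw.
  destruct (mu_le alpha) as [h1 h2].
  assert (hmu := mu_pos alpha ha).
  assert (hB : 0 <= INR B) by apply pos_INR.
  assert (hm1 : 1 <= INR m) by (apply (le_INR 1); lia).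
  assert (hn1 : 1 <= INR n) by (apply (le_INR 1); lia).
  assert (m <= B)%nat.
  { destruct (le_lt_dec m B) as [|hl]; auto. exfalso.
    apply le_INR in hl. rewrite S_INR in hl.
    assert (alpha * (INR B + 1)^2 <= alpha * INR m ^2) by
      (apply Rmult_le_compat_l; [lra|]; simpl; nra).
    assert (mu alpha * (INR B + 1)^2 <= alpha * (INR B + 1)^2) by
      (apply Rmult_le_compat_r; [nra|lra]).
    nra. }
  assert (n <= B)%nat.
  { destruct (le_lt_dec n B) as [|hl]; auto. exfalso.
    apply le_INR in hl. rewrite S_INR in hl.
    assert (mu alpha * (INR B + 1)^2 <= (INR B + 1)^2) by
      (rewrite <- (Rmult_1_l ((INR B + 1)^2)) at 2;
       apply Rmult_le_compat_r; [nra|lra]).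
    assert ((INR B + 1)^2 <= INR n ^2) by (simpl; nra).
    assert (0 <= alpha * INR m ^ 2) by (apply Rmult_le_pos; [lra| nra]).
    lra. }
  apply in_map_iff. exists (m, n). split; [reflexivity|].
  unfold box. apply in_prod_iff. split; apply in_seq; lia.
Qed.

Lemma box_spec alpha B w : In w (map (boxval alpha) (box B)) -> spec_set alpha w.
Proof.
  intros h. apply in_map_iff in h. destruct h as [[m n] [<- h]].
  apply in_prod_iff in h. destruct h as [h1 h2]. apply in_seq in h1, h2.
  exists m, n. unfold boxval; simpl; repeat split; lia.
Qed.

Lemma count_lemma alpha B l : 0 < alpha -> NoDup l ->
  (forall w, In w l -> spec_set alpha w /\ w < mu alpha * (INR B + 1) ^ 2) ->
  (length l <= B * B)%nat.
Proof.
  intros ha hnd hl.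
  replace (B * B)%nat with (length (map (boxval alpha) (box B))).
  2:{ rewrite length_map; unfold box; rewrite length_prod, length_seq; reflexivity. }
  apply NoDup_incl_length; auto.
  intros w hw. destruct (hl w hw). apply in_box; auto.
Qed.

Lemma list_min (l : list R) : l <> nil -> exists w, In w l /\ forall w', In w' l -> w <= w'.
Proof.
  induction l as [|x l IH]; intros h; [congruence|].
  destruct l as [|y l'].
  - exists x; split; [left; auto|]; intros w' [<-|[]]; lra.
  - destruct IH as [w [hw hmin]]; [discriminate|].
    destruct (Rle_dec x w).
    + exists x; split; [left; auto|]. intros w' [<-|hw']; [lra|]. specialize (hmin _ hw'); lra.
    + exists w; split; [right; auto|]. intros w' [<-|hw']; [lra|]. auto.
Qed.

Lemma big_B (y : R) : exists B : nat, y < INR B.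
Proof.
  destruct (archimed y) as [h1 _].
  destruct (Z_le_gt_dec (up y) 0).
  - exists 1%nat. simpl. apply IZR_le in l. lra.
  - exists (Z.to_nat (up y)). rewrite INR_IZR_INZ, Z2Nat.id by lia. lra.
Qed.

Lemma next_exists alpha c : 0 < alpha -> exists w, spec_set alpha w /\ c < w /\
  forall w', spec_set alpha w' -> c < w' -> w <= w'.
Proof.
  intros ha.
  destruct (big_B c) as [n0 hn0].
  set (w0 := alpha * INR 1 ^ 2 + INR (S n0) ^ 2).
  assert (hw0 : spec_set alpha w0) by (exists 1%nat, (S n0); repeat split; lia).
  assert (hcw0 : c < w0).
  { unfold w0. rewrite (S_INR n0). simpl. assert (0 <= INR n0) by apply pos_INR. idtac.
    assert (INR n0 + 1 <= (INR n0 + 1) * ((INR n0 + 1) * 1)) by nra. assert (0 < alpha * (1*1)) by nra. lra. }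
  assert (hmu := mu_pos alpha ha).
  destruct (big_B (w0 / mu alpha)) as [B hB].
  assert (hw0B : w0 < mu alpha * (INR B + 1) ^ 2).
  { assert (0 <= INR B) by apply pos_INR.
    assert (w0 < mu alpha * INR B).
    { apply (Rmult_lt_compat_l (mu alpha)) in hB; auto.
      unfold Rdiv in hB. rewrite <- Rmult_assoc, (Rmult_comm (mu alpha)), Rmult_assoc,
        Rinv_r, Rmult_1_r in hB; lra. }
    assert (INR B <= (INR B + 1)^2) by (simpl; nra). nra. }
  set (L := filter (fun w => if Rlt_dec c w then true else false) (map (boxval alpha) (box B))).
  assert (hw0L : In w0 L).
  { apply filter_In. split. apply in_box; auto. destruct Rlt_dec; auto; lra. }
  destruct (list_min L) as [w [hwL hmin]]. { intro e; rewrite e in hw0L; inversion hw0L. }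
  apply filter_In in hwL. destruct hwL as [hwb hwc].
  destruct Rlt_dec as [hcw|]; [|discriminate].
  exists w. split; [eapply box_spec; eauto|]. split; auto.
  intros w' hs hc. destruct (Rle_dec w' w0).
  - apply hmin. apply filter_In. split. apply in_box; auto; lra. destruct Rlt_dec; auto; lra.
  - specialize (hmin _ hw0L). lra.
Qed.

Lemma NoDup_map_incr (f : nat -> R) a K :
  (forall i j, (a <= i)%nat -> (i < j)%nat -> f i < f j) -> NoDup (map f (seq a K)).
Proof.
  revert a. induction K; intros a hf; simpl; constructor.
  - intro h. apply in_map_iff in h. destruct h as [j [e hj]]. apply in_seq in hj.
    assert (f a < f j) by (apply hf; lia). lra.
  - apply IHK. intros; apply hf; lia.
Qed.

Lemma enum_exists alpha : 0 < alpha -> exists f, is_increasing_enum alpha f.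
Proof.
  intros ha.
  assert (hg : forall c, {w | spec_set alpha w /\ c < w /\
     forall w', spec_set alpha w' -> c < w' -> w <= w'}).
  { intro c. apply constructive_indefinite_description. apply next_exists; auto. }
  set (g := fun c => proj1_sig (hg c)).
  assert (gP : forall c, spec_set alpha (g c) /\ c < g c /\
     forall w', spec_set alpha w' -> c < w' -> g c <= w').
  { intro c. exact (proj2_sig (hg c)). }
  set (f := fix f (n : nat) : R := match n with O => 0 | S n => g (f n) end).
  assert (finc : forall i j, (i < j)%nat -> f i < f j).
  { intros i j hij. induction hij.
    - simpl. apply gP.
    - simpl. destruct (gP (f m)) as [_ [h _]]. lra. }
  exists f. split.
  - intros; apply finc; auto.
  - intros v. split.
    + intros hv. apply NNPP. intros hne.
      assert (hall : forall i, f i < v).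
      { induction i.
        - simpl. eapply spec_pos; eauto.
        - simpl. destruct (gP (f i)) as [_ [_ hm]]. specialize (hm v hv IHi).
          destruct (Req_dec (g (f i)) v) as [e|]; [|lra].
          exfalso; apply hne; exists (S i); split; [lia|exact e]. }
      assert (hmu := mu_pos alpha ha).
      destruct (big_B (v / mu alpha)) as [B hB].
      assert (hvB : v < mu alpha * (INR B + 1) ^ 2).
      { assert (0 <= INR B) by apply pos_INR.
        assert (v < mu alpha * INR B).
        { apply (Rmult_lt_compat_l (mu alpha)) in hB; auto.
          unfold Rdiv in hB. rewrite <- Rmult_assoc, (Rmult_comm (mu alpha)), Rmult_assoc,
            Rinv_r, Rmult_1_r in hB; lra. }
        assert (INR B <= (INR B + 1)^2) by (simpl; nra). nra. }
      assert (hl := count_lemma alpha B (map f (seq 1 (S (B * B)))) ha).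
      rewrite length_map, length_seq in hl. 
      assert (S (B*B) <= B*B)%nat; [|lia].
      apply hl.
      * apply NoDup_map_incr. intros; apply finc; auto.
      * intros w hw. apply in_map_iff in hw. destruct hw as [i [<- hi]]. apply in_seq in hi.
        split; [|specialize (hall i); lra].
        destruct i; [lia|]. simpl. apply gP.
    + intros [i [hi <-]]. destruct i; [lia|]. simpl. apply gP.
Qed.

Lemma lambda_enum alpha : 0 < alpha -> is_increasing_enum alpha (lambda_ alpha).
Proof. intros. unfold lambda_. apply epsilon_spec. apply enum_exists; auto. Qed.

Lemma min_gap_le f k l : (1 <= l)%nat -> (l <= k)%nat -> min_gap f k <= f (S l) - f l.
Proof.
  induction k as [|k IH]; intros h1 h2; [lia|].
  destruct k as [|k].
  - assert (l = 1%nat) by lia. subst. simpl. lra.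
  - change (min_gap f (S (S k))) with (Rmin (min_gap f (S k)) (f (S (S (S k))) - f (S (S k)))).
    destruct (Nat.eq_dec l (S (S k))).
    + subst. apply Rmin_r.
    + eapply Rle_trans; [apply Rmin_l|]. apply IH; lia.
Qed.

Lemma index_bound alpha N v : 0 < alpha -> (1 <= N)%nat -> spec_set alpha v ->
  v <= mu alpha * INR N -> exists i, (1 <= i <= N)%nat /\ lambda_ alpha i = v.
Proof.
  intros ha hN hv hvN.
  destruct (lambda_enum alpha ha) as [hinc hset].
  destruct (proj1 (hset v) hv) as [i [hi e]].
  exists i. split; [|auto]. split; auto.
  set (B := Nat.sqrt N).
  destruct (Nat.sqrt_spec N) as [hB1 hB2]; [lia|]. fold B in hB1, hB2.
  assert (hl := count_lemma alpha B (map (lambda_ alpha) (seq 1 i)) ha).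
  rewrite length_map, length_seq in hl.
  enough (i <= B * B)%nat by lia.
  apply hl.
  - apply NoDup_map_incr. intros; apply hinc; lia.
  - intros w hw. apply in_map_iff in hw. destruct hw as [l [<- hl']]. apply in_seq in hl'.
    split. { apply hset. exists l; split; auto; lia. }
    assert (lambda_ alpha l <= v).
    { rewrite <- e. destruct (Nat.eq_dec l i). subst; lra. apply Rlt_le, hinc; lia. }
    assert (INR N < (INR B + 1)^2).
    { apply lt_INR in hB2. rewrite mult_INR, S_INR in hB2. simpl. lra. }
    assert (hmu := mu_pos alpha ha). nra.
Qed.

Lemma gap_two alpha N v1 v2 : 0 < alpha -> (2 <= N)%nat -> spec_set alpha v1 -> spec_set alpha v2 ->
  v1 <> v2 -> v1 <= mu alpha * INR N -> v2 <= mu alpha * INR N ->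
  delta_min alpha N <= Rabs (v1 - v2).
Proof.
  intros ha hN h1 h2 hne b1 b2.
  destruct (index_bound alpha N v1 ha ltac:(lia) h1 b1) as [i [hi e1]].
  destruct (index_bound alpha N v2 ha ltac:(lia) h2 b2) as [j [hj e2]].
  destruct (lambda_enum alpha ha) as [hinc _].
  unfold delta_min.
  assert (key : forall i j, (1 <= i)%nat -> (i < j)%nat -> (j <= N)%nat ->
     min_gap (lambda_ alpha) (N - 1) <= lambda_ alpha j - lambda_ alpha i).
  { intros i' j' a b c. eapply Rle_trans. apply (min_gap_le _ _ i'); lia.
    destruct (Nat.eq_dec (S i') j'). subst; lra.
    assert (lambda_ alpha (S i') < lambda_ alpha j') by (apply hinc; lia). lra. }
  destruct (lt_eq_lt_dec i j) as [[hl|he]|hl].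
  - specialize (key i j ltac:(lia) hl ltac:(lia)). rewrite e1, e2 in key.
    rewrite Rabs_minus_sym. eapply Rle_trans; [exact key|apply RRle_abs].
  - subst. congruence.
  - specialize (key j i ltac:(lia) hl ltac:(lia)). rewrite e1, e2 in key.
    eapply Rle_trans; [exact key|apply RRle_abs].
Qed.

Lemma find_k beta c2 y : 1 < beta -> 0 < c2 -> c2 <= y ->
  exists k, c2 * beta ^ k <= y < c2 * beta ^ (S k).
Proof.
  intros hb hc hy.
  destruct (Pow_x_infinity beta ltac:(rewrite Rabs_right; lra) (y / c2 + 1)) as [K hK].
  specialize (hK K (le_n K)). rewrite Rabs_right in hK.
  2:{ apply Rle_ge, pow_le; lra. }
  assert (gen : forall n, (exists k, c2 * beta ^ k <= y < c2 * beta ^ (S k)) \/ c2 * beta ^ n <= y).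
  { induction n.
    - right; simpl; lra.
    - destruct IHn as [|h]; [left; auto|].
      destruct (Rlt_dec y (c2 * beta ^ S n)); [left; exists n; lra|right; lra]. }
  destruct (gen K) as [|h]; auto. exfalso.
  assert (y / c2 * c2 = y) by (field; lra).
  assert (c2 * (y / c2 + 1) <= c2 * beta ^ K) by (apply Rmult_le_compat_l; lra).
  nra.
Qed.

Lemma core1 alpha beta c2 K : 0 < alpha -> 1 < beta -> 0 < c2 -> 0 < K ->
  (forall k : nat, exists v1 v2, spec_set alpha v1 /\ spec_set alpha v2 /\ v1 <> v2 /\
     v1 <= c2 * beta ^ k /\ v2 <= c2 * beta ^ k /\ Rabs (v1 - v2) <= K / beta ^ k) ->
  exists C : R, 0 < C /\
    forall N : nat, (2 <= N)%nat -> delta_min alpha N <= C / INR N.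
Proof.
  intros ha hb hc hK H.
  assert (hmu := mu_pos alpha ha).
  destruct (lambda_enum alpha ha) as [hinc _].
  set (d := lambda_ alpha 2 - lambda_ alpha 1).
  assert (hd : 0 < d) by (unfold d; assert (lambda_ alpha 1 < lambda_ alpha 2) by (apply hinc; lia); lra).
  exists (d * c2 / mu alpha + K * beta * c2 / mu alpha). split.
  { assert (0 < d * c2 / mu alpha) by (unfold Rdiv; repeat apply Rmult_lt_0_compat; auto; apply Rinv_0_lt_compat; auto).
    assert (0 < K * beta * c2 / mu alpha) by (unfold Rdiv; repeat apply Rmult_lt_0_compat; try lra; apply Rinv_0_lt_compat; auto).
    lra. }
  intros N hN.
  assert (hNpos : 2 <= INR N) by (apply (le_INR 2); lia).
  assert (hmN : 0 < mu alpha * INR N) by nra.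
  assert (hsplit : forall u w, 0 <= w -> u <= w / INR N -> u <= (d * c2 / mu alpha + w) / INR N).
  { intros u w hw hu. eapply Rle_trans; [exact hu|]. unfold Rdiv.
    apply Rmult_le_compat_r. apply Rlt_le, Rinv_0_lt_compat; lra.
    assert (0 <= d * c2 * / mu alpha) by (repeat apply Rmult_le_pos; try lra; apply Rlt_le, Rinv_0_lt_compat; auto).
    lra. }
  destruct (Rle_dec c2 (mu alpha * INR N)) as [hbig|hsmall].
  - destruct (find_k beta c2 (mu alpha * INR N) hb hc hbig) as [k [hk1 hk2]].
    destruct (H k) as [v1 [v2 [s1 [s2 [hne [b1 [b2 hdiff]]]]]]].
    assert (hbk : 0 < beta ^ k) by (apply pow_lt; lra).
    replace ((d * c2 / mu alpha + K * beta * c2 / mu alpha) / INR N) with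
      ((K * beta * c2 / mu alpha + d * c2 / mu alpha) / INR N) by (f_equal; ring).
    eapply Rle_trans. apply (gap_two alpha N v1 v2); auto; lra.
    eapply Rle_trans. exact hdiff.
    assert (K / beta ^ k <= K * beta * c2 / mu alpha / INR N).
    { simpl in hk2.
      apply (Rmult_le_reg_r (beta ^ k * (mu alpha * INR N))). nra.
      replace (K / beta ^ k * (beta ^ k * (mu alpha * INR N))) with (K * (mu alpha * INR N)) by (field; lra).
      replace (K * beta * c2 / mu alpha / INR N * (beta ^ k * (mu alpha * INR N))) with
        (K * (c2 * (beta * beta ^ k))) by (field; lra).
      apply Rmult_le_compat_l; lra. }
    assert (0 <= d * c2 / mu alpha) by (unfold Rdiv; repeat apply Rmult_le_pos; try lra; apply Rlt_le, Rinv_0_lt_compat; auto).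
    eapply Rle_trans; [exact H0|]. unfold Rdiv. rewrite Rmult_plus_distr_r.
    assert (0 <= d * c2 * / mu alpha * / INR N).
    { apply Rmult_le_pos; [exact H1|]. apply Rlt_le, Rinv_0_lt_compat; lra. }
    lra.
  - unfold Rdiv at 1. rewrite Rmult_plus_distr_r.
    assert (0 <= K * beta * c2 / mu alpha * / INR N).
    { apply Rmult_le_pos; [|apply Rlt_le, Rinv_0_lt_compat; lra].
      unfold Rdiv; repeat apply Rmult_le_pos; try lra. apply Rlt_le, Rinv_0_lt_compat; auto. }
    assert (delta_min alpha N <= d).
    { unfold delta_min, d. apply (min_gap_le _ _ 1); lia. }
    assert (d <= d * c2 / mu alpha * / INR N).
    { replace (d * c2 / mu alpha * / INR N) with (d * (c2 / (mu alpha * INR N))) by (field; lra).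
      assert (1 <= c2 / (mu alpha * INR N)).
      { apply (Rmult_le_reg_r (mu alpha * INR N)); auto. field_simplify; lra. }
      nra. }
    lra.
Qed.

Fixpoint Tp (X0 s : Z) (n : nat) : Z * Z :=
  match n with
  | O => (2%Z, X0)
  | S n => let (a, b) := Tp X0 s n in (b, (X0 * b - s * a)%Z)
  end.
Definition T X0 s n := fst (Tp X0 s n).

Lemma T_SS X0 s n : T X0 s (S (S n)) = (X0 * T X0 s (S n) - s * T X0 s n)%Z.
Proof. unfold T. simpl. destruct (Tp X0 s n). simpl. reflexivity. Qed.

Lemma T_spec X0 s rho rho' : rho + rho' = IZR X0 -> rho * rho' = IZR s ->
  forall n, IZR (T X0 s n) = rho ^ n + rho' ^ n.
Proof.
  intros h1 h2.
  assert (forall n, IZR (T X0 s n) = rho ^ n + rho' ^ n /\ IZR (T X0 s (S n)) = rho ^ S n + rho' ^ S n).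
  { induction n.
    - unfold T; simpl. split; [lra|]. rewrite <- h1; ring.
    - destruct IHn as [a b]. split; auto. rewrite T_SS, minus_IZR, !mult_IZR, a, b, <- h1, <- h2.
      simpl; ring. }
  intro n; apply H.
Qed.

Lemma spec_Z alpha m n : (1 <= m)%Z -> (1 <= n)%Z -> spec_set alpha (alpha * IZR m ^ 2 + IZR n ^ 2).
Proof.
  intros hm hn. exists (Z.to_nat m), (Z.to_nat n). repeat split; try lia.
  rewrite !INR_IZR_INZ, !Z2Nat.id by lia. reflexivity.
Qed.

Lemma sqdiff U V : (1 <= U)%Z -> (1 <= V)%Z -> exists m m', (1 <= m)%Z /\ (1 <= m')%Z /\
  (m * m - m' * m' = 16 * U * V)%Z /\ (m <= 4 * (U + V))%Z /\ (m' <= 4 * (U + V))%Z.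
Proof.
  intros hU hV. destruct (Z.eq_dec U V).
  - subst. exists (5 * V)%Z, (3 * V)%Z. lia.
  - exists (2 * U + 2 * V)%Z, (Z.abs (2 * U - 2 * V)). repeat split; try lia.
Qed.

Lemma pow_bound1 c n : -1 <= c <= 1 -> -1 <= c ^ n <= 1.
Proof. intros h. induction n; simpl; [lra|]. nra. Qed.

Lemma pow_ge1 c n : 1 <= c -> 1 <= c ^ n.
Proof. intros h. induction n; simpl; [lra|]. nra. Qed.

Lemma rat_of alpha M K : (0 < M)%Z -> alpha * IZR M = IZR K -> exists q, alpha = Q2R q.
Proof.
  intros hM e. exists (Qmake K (Z.to_pos M)). unfold Q2R; simpl.
  rewrite Z2Pos.id by lia. rewrite <- e. field. apply not_0_IZR; lia.
Qed.

Section Core2.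
Variables (alpha rho rho' : R) (X0 s A0 B0 : Z) (i j : nat).
Hypotheses (ha : 0 < alpha) (hirr : ~ exists q, alpha = Q2R q)
  (hsum : rho + rho' = IZR X0) (hprod : rho * rho' = IZR s) (hs : s = 1%Z \/ s = (-1)%Z)
  (hrho : 3/2 <= rho) (hA : (0 < A0)%Z) (hB : (0 < B0)%Z)
  (hrel : alpha * IZR A0 * (rho ^ i) ^ 2 = IZR B0 * (rho ^ j) ^ 2).

Let TT n := T X0 s n.

Lemma pp1 : (rho * rho') ^ 2 = 1.
Proof. rewrite hprod. destruct hs as [-> | ->]; simpl; lra. Qed.

Lemma rho'2 : rho' * rho' <= 4/9.
Proof. assert (h := pp1). simpl in h. assert (h2 : rho * rho >= 9/4) by nra.
  assert (0 <= rho' * rho') by nra.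
  assert (rho' * rho' * (rho * rho) = 1) by nra. nra. Qed.

Lemma rho'b n : -1 <= rho' ^ n <= 1.
Proof. apply pow_bound1. assert (h := rho'2). nra. Qed.

Lemma TTs n : IZR (TT n) = rho ^ n + rho' ^ n.
Proof. apply T_spec; auto. Qed.

Lemma TT_bounds n : 0 <= IZR (TT n) <= 2 * rho ^ n.
Proof.
  rewrite TTs. assert (h1 := pow_ge1 rho n ltac:(lra)). assert (h2 := rho'b n). lra.
Qed.

Lemma X_pos n : (0 < TT (S (S n)) - TT n)%Z.
Proof.
  apply lt_IZR. rewrite minus_IZR, !TTs. simpl.
  assert (h1 := pow_ge1 rho n ltac:(lra)). assert (h2 := rho'b n). assert (h3 := rho'2).
  assert (h4 : 5/4 <= rho * rho - 1) by nra.
  assert (rho ^ n * (rho * rho - 1) >= 5/4) by nra.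
  assert (rho' ^ n * (rho' * rho' - 1) >= -1).
  { assert (0 <= rho' * rho') by nra. nra. }
  nra.
Qed.

Lemma Y_pos n : (0 < TT (S (S n)) + TT n)%Z.
Proof.
  apply lt_IZR. rewrite plus_IZR, !TTs. simpl.
  assert (h1 := pow_ge1 rho n ltac:(lra)). assert (h2 := rho'b n). assert (h3 := rho'2).
  assert (rho ^ n * (rho * rho + 1) >= 13/4) by nra.
  assert (rho' ^ n * (rho' * rho' + 1) >= -2).
  { assert (0 <= rho' * rho') by nra. nra. }
  nra.
Qed.

Lemma Dbound k : Rabs (alpha * IZR A0 * (IZR (TT (k + i + 2)) ^ 2 - IZR (TT (k + i)) ^ 2)
   - IZR B0 * (IZR (TT (k + j + 2)) ^ 2 - IZR (TT (k + j)) ^ 2))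
   <= (alpha * IZR A0 + IZR B0) / (rho ^ 2) ^ k.
Proof.
  rewrite !TTs, !pow_add.
  set (P := rho ^ k). set (Q := rho' ^ k). set (a := rho ^ i). set (a' := rho' ^ i).
  set (b := rho ^ j). set (b' := rho' ^ j).
  assert (hpp := pp1).
  assert (hPQ : (P * Q) ^ 2 = 1).
  { unfold P, Q. rewrite <- Rpow_mult_distr, <- pow_mult, Nat.mul_comm, pow_mult, hpp. apply pow1. }
  assert (e : alpha * IZR A0 * ((P * a * rho ^ 2 + Q * a' * rho' ^ 2) ^ 2 - (P * a + Q * a') ^ 2) -
      IZR B0 * ((P * b * rho ^ 2 + Q * b' * rho' ^ 2) ^ 2 - (P * b + Q * b') ^ 2)
      = (rho' ^ 4 - 1) * Q ^ 2 * (alpha * IZR A0 * a' ^ 2 - IZR B0 * b' ^ 2)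
        + (rho ^ 4 - 1) * P ^ 2 * (alpha * IZR A0 * a ^ 2 - IZR B0 * b ^ 2)
        + 2 * P * Q * ((rho * rho') ^ 2 - 1) * (alpha * IZR A0 * a * a' - IZR B0 * b * b')) by ring.
  rewrite e. unfold a, b. rewrite hrel, hpp. 
  replace (IZR B0 * (rho ^ j) ^ 2 - IZR B0 * (rho ^ j) ^ 2) with 0 by ring.
  replace (1 - 1) with 0 by ring. rewrite !Rmult_0_r, !Rmult_0_l, !Rplus_0_r.
  assert (hP : 0 < P) by (unfold P; apply pow_lt; lra).
  assert (hQ2 : Q ^ 2 = / (rho ^ 2) ^ k).
  { rewrite <- pow_mult, Nat.mul_comm, pow_mult. fold P.
    apply (Rmult_eq_reg_l (P ^ 2)). rewrite Rinv_r by (apply pow_nonzero; lra).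
    rewrite <- hPQ. ring. apply pow_nonzero; lra. }
  assert (h4 : 0 <= rho' ^ 4 <= 1).
  { assert (h := rho'2). simpl. split; nra. }
  assert (ha' := rho'b i). assert (hb' := rho'b j). fold a' b' in ha', hb'.
  assert (hA' : 0 < IZR A0) by (apply IZR_lt; lia).
  assert (hB' : 0 < IZR B0) by (apply IZR_lt; lia).
  assert (hx : Rabs (alpha * IZR A0 * a' ^ 2 - IZR B0 * b' ^ 2) <= alpha * IZR A0 + IZR B0).
  { apply Rabs_le. assert (0 <= alpha * IZR A0) by nra. simpl.
    assert (0 <= a' * a' <= 1) by nra. assert (0 <= b' * b' <= 1) by nra.
    assert (0 <= alpha * IZR A0 * (a' * a') <= alpha * IZR A0) by nra.
    assert (0 <= IZR B0 * (b' * b') <= IZR B0) by nra. nra. }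
  rewrite Rabs_mult, Rabs_mult. unfold Rdiv. rewrite hQ2 in *.
  assert (0 < / (rho ^ 2) ^ k) by (apply Rinv_0_lt_compat, pow_lt; nra).
  rewrite (Rabs_right (/ (rho ^ 2) ^ k)) by lra.
  assert (Rabs (rho' ^ 4 - 1) <= 1) by (apply Rabs_le; lra).
  assert (0 <= Rabs (alpha * IZR A0 * a' ^ 2 - IZR B0 * b' ^ 2)) by apply Rabs_pos.
  assert (0 <= Rabs (rho' ^ 4 - 1)) by apply Rabs_pos.
  revert H H0 H1 H2 hx. generalize (Rabs (rho' ^ 4 - 1)) (/ (rho ^ 2) ^ k) (Rabs (alpha * IZR A0 * a' ^ 2 - IZR B0 * b' ^ 2)).
  intros u v w hv hu hw hu0 hwb. assert (u * w <= alpha * IZR A0 + IZR B0) by nra. nra.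
Qed.


Lemma mbound (C0 : Z) n (m : Z) : (0 < C0)%Z -> (1 <= m)%Z ->
  (m <= 4 * (C0 * (TT (S (S n)) - TT n) + (TT (S (S n)) + TT n)))%Z ->
  0 <= IZR m <= 8 * (IZR C0 + 2) * rho ^ (S (S n)).
Proof.
  intros hC hm hle. apply IZR_le in hle. repeat rewrite ?mult_IZR, ?plus_IZR, ?minus_IZR in hle.
  assert (hX := X_pos n). apply IZR_lt in hX. rewrite minus_IZR in hX.
  destruct (TT_bounds n). destruct (TT_bounds (S (S n))).
  assert (0 < IZR C0) by (apply IZR_lt; lia).
  assert (1 <= IZR m) by (apply IZR_le; lia).
  split; [lra|].
  assert (IZR C0 * (IZR (TT (S (S n))) - IZR (TT n)) <= IZR C0 * (2 * rho ^ S (S n))) by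
    (apply Rmult_le_compat_l; lra).
  lra.
Qed.

Lemma sq_bound (m cm : R) k : 0 <= m <= cm * rho ^ k -> m ^ 2 <= cm ^ 2 * (rho ^ 2) ^ k.
Proof.
  intros [h1 h2]. rewrite <- pow_mult, Nat.mul_comm, pow_mult.
  replace (cm ^ 2 * (rho ^ k) ^ 2) with ((cm * rho ^ k) ^ 2) by ring.
  apply pow_incr; auto.
Qed.

Lemma core2 : exists C : R, 0 < C /\
    forall N : nat, (2 <= N)%nat -> delta_min alpha N <= C / INR N.
Proof.
  set (cm := 8 * (IZR A0 + 2) * rho ^ (i + 2)).
  set (cp := 8 * (IZR B0 + 2) * rho ^ (j + 2)).
  assert (hA' : 0 < IZR A0) by (apply IZR_lt; lia).
  assert (hB' : 0 < IZR B0) by (apply IZR_lt; lia).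
  assert (hcp : 0 < cp) by (unfold cp; apply Rmult_lt_0_compat; [lra|apply pow_lt; lra]).
  apply (core1 alpha (rho ^ 2) (alpha * cm ^ 2 + cp ^ 2) (16 * (alpha * IZR A0 + IZR B0))); auto.
  { simpl; nra. }
  { assert (0 <= alpha * cm ^ 2) by (apply Rmult_le_pos; [lra| apply pow2_ge_0]).
    assert (0 < cp ^ 2) by (apply pow_lt; auto). lra. }
  { nra. }
  intro k.
  set (n1 := (k + i)%nat). set (n2 := (k + j)%nat).
  assert (hX1 := X_pos n1). assert (hY1 := Y_pos n1).
  assert (hX2 := X_pos n2). assert (hY2 := Y_pos n2).
  destruct (sqdiff (A0 * (TT (S (S n1)) - TT n1)) (TT (S (S n1)) + TT n1)) as
    [m [m' [hm [hm' [em [bm bm']]]]]]; try nia.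
  destruct (sqdiff (B0 * (TT (S (S n2)) - TT n2)) (TT (S (S n2)) + TT n2)) as
    [p [p' [hp [hp' [ep [bp bp']]]]]]; try nia.
  set (D := alpha * IZR A0 * (IZR (TT (S (S n1))) ^ 2 - IZR (TT n1) ^ 2)
   - IZR B0 * (IZR (TT (S (S n2))) ^ 2 - IZR (TT n2) ^ 2)).
  assert (hD := Dbound k).
  replace (k + i + 2)%nat with (S (S n1)) in hD by (unfold n1; lia).
  replace (k + j + 2)%nat with (S (S n2)) in hD by (unfold n2; lia).
  fold n1 n2 D in hD.
  assert (em' : (m * m - m' * m' = 16 * A0 * (TT (S (S n1)) * TT (S (S n1)) - TT n1 * TT n1))%Z) by (rewrite em; ring).
  assert (ep' : (p * p - p' * p' = 16 * B0 * (TT (S (S n2)) * TT (S (S n2)) - TT n2 * TT n2))%Z) by (rewrite ep; ring).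
  apply (f_equal IZR) in em', ep'. repeat rewrite ?minus_IZR, ?mult_IZR in em', ep'.
  exists (alpha * IZR m ^ 2 + IZR p' ^ 2), (alpha * IZR m' ^ 2 + IZR p ^ 2).
  assert (ediff : alpha * IZR m ^ 2 + IZR p' ^ 2 - (alpha * IZR m' ^ 2 + IZR p ^ 2) = 16 * D).
  { unfold D. replace (IZR m ^ 2) with (IZR m' ^2 + (IZR m * IZR m - IZR m' * IZR m')) by ring.
    replace (IZR p ^ 2) with (IZR p' ^2 + (IZR p * IZR p - IZR p' * IZR p')) by ring.
    rewrite em', ep'. ring. }
  assert (hrk : rho ^ k > 0) by (apply pow_lt; lra).
  assert (b1 : forall z, (1 <= z)%Z -> (z <= 4 * (A0 * (TT (S (S n1)) - TT n1) + (TT (S (S n1)) + TT n1)))%Z ->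
     IZR z ^ 2 <= cm ^ 2 * (rho ^ 2) ^ k).
  { intros z h1 h2. apply sq_bound. destruct (mbound A0 n1 z) as [u v]; auto; try lia.
    split; auto. unfold cm. replace (S (S n1)) with (k + (i + 2))%nat in v by (unfold n1; lia).
    rewrite pow_add in v. lra. }
  assert (b2 : forall z, (1 <= z)%Z -> (z <= 4 * (B0 * (TT (S (S n2)) - TT n2) + (TT (S (S n2)) + TT n2)))%Z ->
     IZR z ^ 2 <= cp ^ 2 * (rho ^ 2) ^ k).
  { intros z h1 h2. apply sq_bound. destruct (mbound B0 n2 z) as [u v]; auto; try lia.
    split; auto. unfold cp. replace (S (S n2)) with (k + (j + 2))%nat in v by (unfold n2; lia).
    rewrite pow_add in v. lra. }
  repeat split.
  - apply spec_Z; auto.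
  - apply spec_Z; auto.
  - intro e. apply hirr.
    assert (hD0 : D = 0) by lra. unfold D in hD0.
    apply (rat_of alpha (A0 * (TT (S (S n1)) * TT (S (S n1)) - TT n1 * TT n1))
                        (B0 * (TT (S (S n2)) * TT (S (S n2)) - TT n2 * TT n2))).
    + assert (hh := Z.mul_pos_pos _ _ hX1 hY1). apply Z.mul_pos_pos; [lia|]. nia.
    + repeat rewrite ?mult_IZR, ?minus_IZR. rewrite <- !Rsqr_pow2 in hD0. unfold Rsqr in hD0. lra.
  - specialize (b1 m hm bm). specialize (b2 p' hp' bp').
    assert (alpha * IZR m ^ 2 <= alpha * (cm ^ 2 * (rho ^ 2) ^ k)) by (apply Rmult_le_compat_l; lra). nra.
  - specialize (b1 m' hm' bm'). specialize (b2 p hp bp).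
    assert (alpha * IZR m' ^ 2 <= alpha * (cm ^ 2 * (rho ^ 2) ^ k)) by (apply Rmult_le_compat_l; lra). nra.
  - rewrite ediff, Rabs_mult, Rabs_right by lra.
    unfold Rdiv in *. rewrite Rmult_assoc. apply Rmult_le_compat_l; lra.
Qed.

End Core2.

Theorem mainTheorem9 (a x : Z) (sigma : Z) (r : Q) (alpha : R) :
  a <> 0%Z -> Z.even a = true ->
  x <> 0%Z ->
  (sigma = 1%Z \/ sigma = (-1)%Z) ->
  ~ (r == 0)%Q ->
  alpha = Q2R r * powerRZ ((IZR x + sqrt (IZR x ^ 2 + 4 * IZR sigma)) / 2) a ->
  0 < alpha ->
  (~ exists q : Q, alpha = Q2R q) ->
  exists C : R, 0 < C /\
    forall N : nat, (2 <= N)%nat -> delta_min alpha N <= C / INR N.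
Proof.
  intros ha0 heven hx hsig hr0 halpha hpos hirr.
  set (X0 := Z.abs x).
  set (Dz := (X0 * X0 + 4 * sigma)%Z).
  assert (eD : IZR x ^ 2 + 4 * IZR sigma = IZR Dz).
  { unfold Dz. replace (X0 * X0)%Z with (x * x)%Z by (unfold X0; lia).
    rewrite plus_IZR, !mult_IZR. simpl; ring. }
  rewrite eD in halpha.
  destruct (Z_le_gt_dec Dz 0) as [hD|hD].
  - exfalso. apply hirr. rewrite sqrt_neg_0 in halpha by (apply IZR_le in hD; lra).
    exists (r * (Qmake x 2) ^ a)%Q.
    rewrite Q2R_mult, RMicromega.Q2RpowerRZ.
    + rewrite halpha. f_equal. f_equal. unfold Q2R; simpl. lra.
    + left. intro e. unfold Qeq in e; simpl in e. lia.
  - assert (hD5 : (5 <= Dz)%Z).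
    { assert (hy : (1 <= X0)%Z) by (unfold X0; lia). unfold Dz in *. clearbody X0.
      destruct hsig; subst; try nia.
      assert (hh : (3 <= X0 \/ X0 <= 2)%Z) by lia; destruct hh; nia. }
    assert (hX01 : (1 <= X0)%Z) by (unfold X0; lia).
    set (sq := sqrt (IZR Dz)).
    assert (hsq : sq * sq = IZR Dz) by (apply sqrt_sqrt; apply IZR_le; lia).
    assert (hsq2 : 2 <= sq).
    { replace 2 with (sqrt 4). apply sqrt_le_1_alt. apply IZR_le in hD5. lra.
      replace 4 with (2 * 2) by ring. apply sqrt_square; lra. }
    set (rho := (IZR X0 + sq) / 2). set (rho' := (IZR X0 - sq) / 2).
    assert (hsum : rho + rho' = IZR X0) by (unfold rho, rho'; field).
    assert (hprod : rho * rho' = IZR (- sigma)).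
    { unfold rho, rho'. rewrite opp_IZR.
      replace ((IZR X0 + sq) / 2 * ((IZR X0 - sq) / 2)) with ((IZR X0 * IZR X0 - sq * sq) / 4) by field.
      rewrite hsq. unfold Dz. rewrite plus_IZR, !mult_IZR. field. }
    assert (hs : (- sigma = 1)%Z \/ (- sigma = -1)%Z) by lia.
    assert (hrho : 3 / 2 <= rho) by (unfold rho; apply IZR_le in hX01; lra).
    assert (hpp : (rho * rho') ^ 2 = 1) by (rewrite hprod; destruct hs as [-> | ->]; simpl; lra).
    assert (hrhon : forall n, 0 < rho ^ n) by (intro; apply pow_lt; lra).
    assert (heps : forall n, (((IZR x + sq) / 2) ^ n) ^ 2 = (rho ^ n) ^ 2 \/
                             (((IZR x + sq) / 2) ^ n) ^ 2 = / (rho ^ n) ^ 2).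
    { intro n. destruct (Z_le_gt_dec 0 x) as [hx0|hx0].
      - left. unfold rho, X0. rewrite Z.abs_eq by lia. reflexivity.
      - right. replace ((IZR x + sq) / 2) with (- rho') by
          (unfold rho', X0; rewrite Z.abs_neq by lia; rewrite opp_IZR; field).
        apply (Rmult_eq_reg_l ((rho ^ n) ^ 2)). 2:{ apply pow_nonzero. specialize (hrhon n); lra. }
        rewrite Rinv_r by (apply pow_nonzero; specialize (hrhon n); lra).
        rewrite <- Rpow_mult_distr, <- Rpow_mult_distr, <- pow_mult, Nat.mul_comm, pow_mult.
        replace ((rho * - rho') ^ 2) with ((rho * rho') ^ 2) by ring. rewrite hpp. apply pow1. }
    assert (hW : exists n, powerRZ ((IZR x + sq) / 2) a = (rho ^ n) ^ 2 \/
                           powerRZ ((IZR x + sq) / 2) a = / (rho ^ n) ^ 2).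
    { destruct a as [|p|p]; [congruence| |].
      - destruct p as [p|p|]; simpl in heven; try discriminate.
        exists (Pos.to_nat p). unfold powerRZ. rewrite Pos2Nat.inj_xO, Nat.mul_comm, pow_mult.
        apply heps.
      - destruct p as [p|p|]; simpl in heven; try discriminate.
        exists (Pos.to_nat p). unfold powerRZ. rewrite Pos2Nat.inj_xO, Nat.mul_comm, pow_mult.
        destruct (heps (Pos.to_nat p)) as [-> | ->]; [right|left]; auto. apply Rinv_inv. }
    destruct hW as [n hW].
    set (pz := Qnum r). set (qz := Z.pos (Qden r)).
    assert (hQ : Q2R r = IZR pz / IZR qz) by reflexivity.
    assert (hq : 0 < IZR qz) by (apply IZR_lt; unfold qz; lia).
    assert (hWpos : 0 < powerRZ ((IZR x + sq) / 2) a).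
    { destruct hW as [-> | ->]. specialize (hrhon n); nra.
      apply Rinv_0_lt_compat. specialize (hrhon n); nra. }
    assert (hpz : (0 < pz)%Z).
    { apply lt_IZR. rewrite halpha, hQ in hpos. fold sq in hpos.
      assert (0 < IZR pz / IZR qz).
      { revert hpos hWpos. generalize (powerRZ ((IZR x + sq) / 2) a) (IZR pz / IZR qz).
        intros w u h1 h2. destruct (Rle_dec u 0); [|lra]. assert (u * w <= 0) by (rewrite <- (Rmult_0_l w); apply Rmult_le_compat_r; lra). lra. }
      unfold Rdiv in H. assert (0 < / IZR qz) by (apply Rinv_0_lt_compat; lra). nra. }
    assert (hqz : (0 < qz)%Z) by (unfold qz; lia).
    fold sq in halpha. destruct hW as [hW|hW]; rewrite hW, hQ in halpha.
    + apply (core2 alpha rho rho' X0 (- sigma) qz pz 0 n); auto.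
      rewrite halpha. simpl. field. lra.
    + apply (core2 alpha rho rho' X0 (- sigma) qz pz n 0); auto.
      rewrite halpha. simpl. field. assert (rho ^ n <> 0) by (specialize (hrhon n); lra). repeat split; auto; lra.
Qed.
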